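(* Let $\mathcal{S}=\langle\mathcal{L},\vdash\rangle$ be a logical structure and $\varrho,\sigma\subseteq\mathcal{P}(\mathcal{L})\times\mathcal{L}$. (i) $(\vdash^\varrho)^\sigma\,\subseteq\,\vdash^\varrho$, with equality if $\varrho\subseteq\sigma$. (ii) If $\mathcal{S}$ is monotonic, then $(\vdash^\varrho)^\sigma\,\subseteq\,\vdash^\sigma$. (iii) If $\varrho\subseteq\sigma$, then $(\vdash^\varrho)^\sigma\,\subseteq\,\vdash^\sigma$. (iv) If $\vdash^\sigma\,\subseteq\,\vdash^\varrho$, then $\vdash^\sigma\,\subseteq\,(\vdash^\varrho)^\sigma$. (v) If $\varrho\subseteq\sigma$, then $\vdash^\varrho\,=\,\vdash^\sigma$ iff $(\vdash^\varrho)^\sigma\,=\,\vdash^\sigma$. Moreover, statements (i)–(v) remain true when $\vdash^\varrho$, $\vdash^\sigma$ and $(\vdash^\varrho)^\sigma$ are replaced throughout by the pure companions $\vdash^{p\varrho}$, $\vdash^{p\sigma}$ and $(\vdash^{p\varrho})^{p\sigma}$ respectively.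
   Context: A logical structure is a pair $\langle\mathcal{L},\vdash\rangle$ with $\mathcal{L}$ a set and $\vdash\subseteq\mathcal{P}(\mathcal{L})\times\mathcal{L}$ arbitrary; it is monotonic if $\Gamma\vdash\alpha$ and $\Gamma\subseteq\Sigma$ imply $\Sigma\vdash\alpha$. For $\varrho\subseteq\mathcal{P}(\mathcal{L})\times\mathcal{L}$: $\Gamma\vdash^\varrho\alpha$ iff there is $\Delta\subseteq\Gamma$ with $(\Delta,\alpha)\in\varrho$ and $\Delta\vdash\alpha$; $\Gamma\vdash^{p\varrho}\alpha$ iff there is a nonempty $\Delta\subseteq\Gamma$ with $(\Delta,\alpha)\in\varrho$ and $\Delta\vdash\alpha$. $(\vdash^\varrho)^\sigma$ denotes the $\sigma$-companion of $\langle\mathcal{L},\vdash^\varrho\rangle$, and $(\vdash^{p\varrho})^{p\sigma}$ the pure $\sigma$-companion of $\langle\mathcal{L},\vdash^{p\varrho}\rangle$. *)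

(* Defs.v *)
Set Implicit Arguments.

Definition lrel (L : Type) := (L -> Prop) -> L -> Prop.

Definition subset {L : Type} (A B : L -> Prop) : Prop := forall x, A x -> B x.

Definition nonempty {L : Type} (A : L -> Prop) : Prop := exists x, A x.

Definition rsub {L : Type} (r s : lrel L) : Prop :=
  forall Gamma a, r Gamma a -> s Gamma a.
Definition req {L : Type} (r s : lrel L) : Prop := rsub r s /\ rsub s r.

Definition monotonic {L : Type} (vd : lrel L) : Prop :=
  forall Gamma Sigma a, vd Gamma a -> subset Gamma Sigma -> vd Sigma a.

Definition companion {L : Type} (vd rho : lrel L) : lrel L :=
  fun Gamma a => exists Delta, subset Delta Gamma /\ rho Delta a /\ vd Delta a.

Definition pcompanion {L : Type} (vd rho : lrel L) : lrel L :=
  fun Gamma a => exists Delta, nonempty Delta /\ subset Delta Gamma /\ rho Delta a /\ vd Delta a.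

(* Main.v *)
Require Import Defs.

Section H.
Variables (L : Type) (vd rho sigma : lrel L).
Lemma c1 : rsub (companion (companion vd rho) sigma) (companion vd rho).
Proof. intros G a [D [HD [_ [D' [HD' [Hr Hv]]]]]]. exists D'. split; [intros x Hx; apply HD, HD', Hx|auto]. Qed.
Lemma c1' : rsub rho sigma -> rsub (companion vd rho) (companion (companion vd rho) sigma).
Proof. intros Hrs G a [D [HD [Hr Hv]]]. exists D. split; auto. split; auto. exists D. split; [intros x Hx; exact Hx|auto]. Qed.
Lemma c2 : monotonic vd -> rsub (companion (companion vd rho) sigma) (companion vd sigma).
Proof. intros Hm G a [D [HD [Hs [D' [HD' [Hr Hv]]]]]]. exists D. split; auto. split; auto. eapply Hm; eauto. Qed.
Lemma c3 : rsub rho sigma -> rsub (companion (companion vd rho) sigma) (companion vd sigma).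
Proof. intros Hrs G a [D [HD [_ [D' [HD' [Hr Hv]]]]]]. exists D'. split; [intros x Hx; apply HD, HD', Hx|auto]. Qed.
Lemma c4 : rsub (companion vd sigma) (companion vd rho) ->
         rsub (companion vd sigma) (companion (companion vd rho) sigma).
Proof. intros H G a [D [HD [Hs Hv]]]. exists D. split; auto. split; auto. apply H. exists D. split; [intros x Hx; exact Hx|auto]. Qed.

Lemma p1 : rsub (pcompanion (pcompanion vd rho) sigma) (pcompanion vd rho).
Proof. intros G a [D [Hn [HD [_ [D' [Hn' [HD' [Hr Hv]]]]]]]]. exists D'. split; auto. split; [intros x Hx; apply HD, HD', Hx|auto]. Qed.
Lemma p1' : rsub rho sigma -> rsub (pcompanion vd rho) (pcompanion (pcompanion vd rho) sigma).
Proof. intros Hrs G a [D [Hn [HD [Hr Hv]]]]. exists D. split; auto. split; auto. split; auto. exists D. split; auto. split; [intros x Hx; exact Hx|auto]. Qed.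
Lemma p2 : monotonic vd -> rsub (pcompanion (pcompanion vd rho) sigma) (pcompanion vd sigma).
Proof. intros Hm G a [D [Hn [HD [Hs [D' [Hn' [HD' [Hr Hv]]]]]]]]. exists D. split; auto. split; auto. split; auto. eapply Hm; eauto. Qed.
Lemma p3 : rsub rho sigma -> rsub (pcompanion (pcompanion vd rho) sigma) (pcompanion vd sigma).
Proof. intros Hrs G a [D [Hn [HD [_ [D' [Hn' [HD' [Hr Hv]]]]]]]]. exists D'. split; auto. split; [intros x Hx; apply HD, HD', Hx|auto]. Qed.
Lemma p4 : rsub (pcompanion vd sigma) (pcompanion vd rho) ->
         rsub (pcompanion vd sigma) (pcompanion (pcompanion vd rho) sigma).
Proof. intros H G a [D [Hn [HD [Hs Hv]]]]. exists D. split; auto. split; auto. split; auto. apply H. exists D. split; auto. split; [intros x Hx; exact Hx|auto]. Qed.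
End H.

Theorem theorem3p10 (L : Type) (vd rho sigma : lrel L) :
  (* plain companions *)
  ((rsub (companion (companion vd rho) sigma) (companion vd rho)
    /\ (rsub rho sigma -> req (companion (companion vd rho) sigma) (companion vd rho)))
   /\ (monotonic vd -> rsub (companion (companion vd rho) sigma) (companion vd sigma))
   /\ (rsub rho sigma -> rsub (companion (companion vd rho) sigma) (companion vd sigma))
   /\ (rsub (companion vd sigma) (companion vd rho) ->
         rsub (companion vd sigma) (companion (companion vd rho) sigma))
   /\ (rsub rho sigma ->
         (req (companion vd rho) (companion vd sigma) <->
          req (companion (companion vd rho) sigma) (companion vd sigma))))
  /\
  (* pure companions *)
  ((rsub (pcompanion (pcompanion vd rho) sigma) (pcompanion vd rho)
    /\ (rsub rho sigma -> req (pcompanion (pcompanion vd rho) sigma) (pcompanion vd rho)))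
   /\ (monotonic vd -> rsub (pcompanion (pcompanion vd rho) sigma) (pcompanion vd sigma))
   /\ (rsub rho sigma -> rsub (pcompanion (pcompanion vd rho) sigma) (pcompanion vd sigma))
   /\ (rsub (pcompanion vd sigma) (pcompanion vd rho) ->
         rsub (pcompanion vd sigma) (pcompanion (pcompanion vd rho) sigma))
   /\ (rsub rho sigma ->
         (req (pcompanion vd rho) (pcompanion vd sigma) <->
          req (pcompanion (pcompanion vd rho) sigma) (pcompanion vd sigma)))).
Proof.
  split; (split; [split; [| intros Hrs; split] | split; [| split; [| split; [| intros Hrs]]]]).
  all: try solve [eauto using c1, c1', c2, c3, c4, p1, p1', p2, p3, p4].
  - pose proof (@c1 L vd rho sigma). pose proof (@c1' L vd rho sigma Hrs).
    unfold req, rsub in *. split; intros [A B]; split; intros G a Hx; eauto.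
  - pose proof (@p1 L vd rho sigma). pose proof (@p1' L vd rho sigma Hrs).
    unfold req, rsub in *. split; intros [A B]; split; intros G a Hx; eauto.
Qed.
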